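(* Let $n,m\ge1$, $S=\{(x,y)\in\mathbb{R}^{n+m} : \|x\|\le\|y\|\}$, and for $\lambda\in\mathbb{R}^n$ with $\|\lambda\|=1$ let $C_\lambda=\{(x,y)\in\mathbb{R}^{n+m} : \lambda^\mathsf{T} x\ge\|y\|\}$. Then $C_\lambda$ is a maximal $S$-free set. Furthermore, if $(\bar x,\bar y)\in\mathbb{R}^{n+m}$ satisfies $\|\bar x\|>\|\bar y\|$ and $\lambda=\bar x/\|\bar x\|$, then $(\bar x,\bar y)\in\operatorname{int}(C_\lambda)$.
   Context: $\|\cdot\|$ is the Euclidean norm. For a closed set $S\subseteq\mathbb{R}^N$, a convex set $C$ is $S$-free if $\operatorname{int}(C)\cap S=\emptyset$, and maximal $S$-free if it is $S$-free and no $S$-free convex set strictly contains it. *)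

(* Defs.v *)
From HB Require Import structures.
From mathcomp Require Import all_boot all_order all_algebra.
From mathcomp Require Import all_classical all_reals all_analysis.
Set Implicit Arguments. Unset Strict Implicit. Unset Printing Implicit Defensive.
Import Order.TTheory GRing.Theory Num.Theory.
Import numFieldNormedType.Exports.
Local Open Scope classical_set_scope.
Local Open Scope ring_scope.

(* R^N is modelled as row vectors 'rV[R]_N, with their canonical (product)
   topology from MathComp-Analysis; a point of R^(n+m) is split as (x,y) with
   x = lsubmx p and y = rsubmx p. *)

Definition enorm {R : realType} {N : nat} (x : 'rV[R]_N) : R :=
  Num.sqrt (\sum_(i < N) x 0 i ^+ 2).

Definition dotp {R : realType} {N : nat} (u v : 'rV[R]_N) : R :=
  \sum_(i < N) u 0 i * v 0 i.

Definition convex_set {R : realType} {N : nat} (C : set 'rV[R]_N) : Prop :=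
  forall a b, C a -> C b -> forall t : R, 0 <= t -> t <= 1 ->
    C (t *: a + (1 - t) *: b).

Definition S_free {R : realType} {N : nat} (S C : set 'rV[R]_N) : Prop :=
  convex_set C /\ interior C `&` S = set0.

Definition maximal_S_free {R : realType} {N : nat} (S C : set 'rV[R]_N) : Prop :=
  S_free S C /\ forall D, S_free S D -> C `<=` D -> D = C.

Definition Scone {R : realType} (n m : nat) : set 'rV[R]_(n + m) :=
  [set p | enorm (lsubmx p) <= enorm (rsubmx p)].

Definition Clam {R : realType} (n m : nat) (lam : 'rV[R]_n) : set 'rV[R]_(n + m) :=
  [set p | enorm (rsubmx p) <= dotp lam (lsubmx p)].

(* Main.v *)
Require Import Defs.
From HB Require Import structures.
From mathcomp Require Import all_boot all_order all_algebra.
From mathcomp Require Import all_classical all_reals all_analysis.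
From mathcomp Require Import ring lra.
Import Order.TTheory GRing.Theory Num.Theory.
Import numFieldNormedType.Exports.
Local Open Scope classical_set_scope.
Local Open Scope ring_scope.
Set Implicit Arguments. Unset Strict Implicit. Unset Printing Implicit Defensive.

Section H.
Variable R : realType.

Lemma sumsq_ge0 N (a : 'rV[R]_N) : 0 <= \sum_(i < N) a 0 i ^+ 2.
Proof. by apply: sumr_ge0 => i _; rewrite sqr_ge0. Qed.

Lemma enorm_ge0 N (a : 'rV[R]_N) : 0 <= enorm a.
Proof. exact: sqrtr_ge0. Qed.

Lemma enorm_sq N (a : 'rV[R]_N) : enorm a ^+ 2 = \sum_(i < N) a 0 i ^+ 2.
Proof. by rewrite sqr_sqrtr // sumsq_ge0. Qed.

Lemma dotpp N (a : 'rV[R]_N) : dotp a a = enorm a ^+ 2.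
Proof. by rewrite enorm_sq /dotp; apply: eq_bigr => i _; rewrite expr2. Qed.

Lemma CS N (u v : 'rV[R]_N) : dotp u v <= enorm u * enorm v.
Proof.
set a := enorm u; set b := enorm v.
have H : 0 <= \sum_(i < N) (b * u 0 i - a * v 0 i) ^+ 2.
  by apply: sumr_ge0 => i _; rewrite sqr_ge0.
have E : \sum_(i < N) (b * u 0 i - a * v 0 i) ^+ 2 =
   b ^+ 2 * a ^+ 2 - 2 * (a * b) * dotp u v + a ^+ 2 * b ^+ 2.
  rewrite (eq_bigr (fun i => b^+2 * u 0 i ^+2 - 2*(a*b) * (u 0 i * v 0 i) + a^+2 * v 0 i ^+ 2)); last by move=> i _; ring.
  by rewrite big_split sumrB /= -!mulr_sumr /a /b !enorm_sq.
have a0 : 0 <= a by exact: enorm_ge0.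
have b0 : 0 <= b by exact: enorm_ge0.
rewrite E in H.
have [ab0|ab0] := eqVneq (a * b) 0.
  move/eqP: ab0; rewrite mulf_eq0 => /orP[] /eqP Hz.
  - have Hu : forall i, u 0 i = 0.
      move=> i; apply/eqP; rewrite -sqrf_eq0; apply/eqP.
      have : \sum_(j < N) u 0 j ^+ 2 == 0 by rewrite -enorm_sq -/a Hz expr0n.
      rewrite psumr_eq0 => [/allP/(_ i (mem_index_enum _))/implyP/(_ isT)/eqP //|j _].
      by rewrite sqr_ge0.
    rewrite Hz mul0r /dotp big1 // => i _; by rewrite Hu mul0r.
  - have Hu : forall i, v 0 i = 0.
      move=> i; apply/eqP; rewrite -sqrf_eq0; apply/eqP.
      have : \sum_(j < N) v 0 j ^+ 2 == 0 by rewrite -enorm_sq -/b Hz expr0n.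
      rewrite psumr_eq0 => [/allP/(_ i (mem_index_enum _))/implyP/(_ isT)/eqP //|j _].
      by rewrite sqr_ge0.
    rewrite Hz mulr0 /dotp big1 // => i _; by rewrite Hu mulr0.
have abp : 0 < a * b by rewrite lt_def ab0 mulr_ge0.
have : 2 * (a * b) * dotp u v <= 2 * (a * b) * (a * b) by nra.
move=> h; rewrite -(ler_pM2l (_ : 0 < 2 * (a * b))) //; rewrite mulr_gt0 //.

Qed.

Lemma enorm_sqrt_sq N (a : 'rV[R]_N) : enorm a = Num.sqrt (enorm a ^+ 2).
Proof. by rewrite sqrtr_sqr ger0_norm // enorm_ge0. Qed.

Lemma enormD N (u v : 'rV[R]_N) : enorm (u + v) <= enorm u + enorm v.
Proof.
have a0 := enorm_ge0 u; have b0 := enorm_ge0 v.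
rewrite {1}/enorm -(ger0_norm (addr_ge0 a0 b0)) -sqrtr_sqr; apply: ler_wsqrtr.
have E : \sum_(i < N) (u + v) 0 i ^+ 2 = enorm u ^+ 2 + 2 * dotp u v + enorm v ^+ 2.
  rewrite (eq_bigr (fun i => u 0 i ^+ 2 + 2 * (u 0 i * v 0 i) + v 0 i ^+ 2)); last first.
    by move=> i _; rewrite mxE; ring.
  by rewrite !big_split /= -mulr_sumr !enorm_sq.
rewrite E; have := CS u v; nra.
Qed.

Lemma enormZ N (t : R) (u : 'rV[R]_N) : enorm (t *: u) = `|t| * enorm u.
Proof.
rewrite /enorm (eq_bigr (fun i => t ^+ 2 * u 0 i ^+ 2)); last first.
  by move=> i _; rewrite mxE exprMn.
by rewrite -mulr_sumr sqrtrM ?sqr_ge0 // sqrtr_sqr.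
Qed.

Lemma enorm0 N : enorm (0 : 'rV[R]_N) = 0.
Proof. by rewrite -(scale0r 0) enormZ normr0 mul0r. Qed.

Lemma dotpD N (l u v : 'rV[R]_N) : dotp l (u + v) = dotp l u + dotp l v.
Proof. by rewrite /dotp -big_split; apply: eq_bigr => i _; rewrite mxE mulrDr. Qed.

Lemma dotpZ N (l u : 'rV[R]_N) t : dotp l (t *: u) = t * dotp l u.
Proof. by rewrite /dotp mulr_sumr; apply: eq_bigr => i _; rewrite mxE mulrCA. Qed.

Lemma dotpN N (l u : 'rV[R]_N) : dotp l (- u) = - dotp l u.
Proof. by rewrite -scaleN1r dotpZ mulN1r. Qed.

Lemma dotpZl N (l u : 'rV[R]_N) t : dotp (t *: l) u = t * dotp l u.
Proof. by rewrite /dotp mulr_sumr; apply: eq_bigr => i _; rewrite mxE mulrA. Qed.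

Lemma cont_sum (T : topologicalType) N (F : 'I_N -> T -> R) :
  (forall i, continuous (F i)) -> continuous (fun z => \sum_(i < N) F i z).
Proof.
move=> H z; elim: (index_enum _) => [|i s IH].
  under eq_fun do rewrite big_nil. exact: cst_continuous.
under eq_fun do rewrite big_cons.
exact: (continuousD (H i z) IH).
Qed.

Lemma cont_g n m (lam : 'rV[R]_n) :
  continuous (fun z : 'rV[R]_(n + m) => dotp lam (lsubmx z) - enorm (rsubmx z)).
Proof.
move=> z.
apply: (@continuousB _ _ _ (fun z : 'rV[R]_(n + m) => dotp lam (lsubmx z))
   (fun z => enorm (rsubmx z))).
  rewrite /dotp; apply: cont_sum => i y.
  under eq_fun do rewrite mxE.
  apply: (@continuousM _ _ (fun=> lam 0 i) (fun y : 'rV[R]_(n+m) => y 0 (lshift m i))).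
    exact: cst_continuous.
  exact: coord_continuous.
rewrite /enorm.
apply: (@continuous_comp _ _ _ (fun y : 'rV[R]_(n+m) => \sum_(i < m) rsubmx y 0 i ^+ 2) Num.sqrt).
  apply: cont_sum => i y.
  under eq_fun do rewrite mxE expr2.
  apply: (@continuousM _ _ (fun y : 'rV[R]_(n+m) => y 0 (rshift n i)) (fun y : 'rV[R]_(n+m) => y 0 (rshift n i)));
  exact: coord_continuous.
exact: sqrt_continuous.
Qed.

Lemma open_strict n m (lam : 'rV[R]_n) :
  open [set z : 'rV[R]_(n + m) | enorm (rsubmx z) < dotp lam (lsubmx z)].
Proof.
have -> : [set z : 'rV[R]_(n + m) | enorm (rsubmx z) < dotp lam (lsubmx z)] =
  (fun z : 'rV[R]_(n + m) => dotp lam (lsubmx z) - enorm (rsubmx z)) @^-1` [set x | 0 < x].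
  by apply/seteqP; split => z /=; rewrite subr_gt0.
apply: open_comp; last exact: open_gt.
by move=> z _; apply: cont_g.
Qed.

End H.

Theorem theorem7 (R : realType) (n m : nat) (hn : (1 <= n)%N) (hm : (1 <= m)%N) :
  (forall lam : 'rV[R]_n, enorm lam = 1 ->
     maximal_S_free (@Scone R n m) (@Clam R n m lam)) /\
  (forall p : 'rV[R]_(n + m), enorm (rsubmx p) < enorm (lsubmx p) ->
     interior (@Clam R n m ((enorm (lsubmx p))^-1 *: lsubmx p)) p).
Proof.
have two0 : (2 : R) != 0 by rewrite pnatr_eq0.
split; last first.
  move=> p hp.
  set lam := _ *: _.
  have sub : [set z : 'rV[R]_(n + m) | enorm (rsubmx z) < dotp lam (lsubmx z)]
     `<=` interior (@Clam R n m lam).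
    rewrite -open_subsetE; first by move=> z /= /ltW.
    exact: (@open_strict R n m lam).
  apply: sub => /=.
  have x0 : 0 < enorm (lsubmx p) by apply: le_lt_trans hp; exact: enorm_ge0.
  by rewrite /lam dotpZl dotpp expr2 mulKf ?gt_eqF.
move=> lam hlam.
have ll : dotp lam lam = 1 by rewrite dotpp hlam expr1n.
set O := [set z : 'rV[R]_(n + m) | enorm (rsubmx z) < dotp lam (lsubmx z)].
have OC : O `<=` @Clam R n m lam by move=> z /= /ltW.
have Cconv : Defs.convex_set (@Clam R n m lam).
  move=> a b Ca Cb t t0 t1; rewrite /Clam /=.
  rewrite !linearD /= !linearZ /= dotpD !dotpZ.
  apply: le_trans (enormD _ _) _.
  rewrite !enormZ !ger0_norm ?subr_ge0 //.
  rewrite /Clam /= in Ca Cb.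
  by apply: lerD; apply: ler_wpM2l; rewrite ?subr_ge0.
split.
  split => //.
  apply/seteqP; split=> [z [Hi Hs]|z //].
  rewrite /interior /= in Hi.
  have [e e0 He] := (nbhs_ballP _ _).1 Hi.
  set v := row_mx lam (0 : 'rV[R]_m).
  set eps := e / (`|v| + 1).
  have v1 : 0 < `|v| + 1 by rewrite ltr_wpDl.
  have eps0 : 0 < eps by rewrite divr_gt0.
  have Ee : eps * (`|v| + 1) = e by rewrite /eps mulfVK ?gt_eqF.
  have : @Clam R n m lam (z - eps *: v).
    apply: He; rewrite -ball_normE /ball_ /= opprB addrC subrK normrZ gtr0_norm //.
    by rewrite -Ee ltr_pM2l // ltrDl.
  rewrite /Clam /= !linearB /= !linearZ /= row_mxKl row_mxKr oppr0 scaler0 addr0.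
  rewrite dotpD dotpZ dotpN ll mulrN1.
  have cs := CS lam (lsubmx z); rewrite hlam mul1r in cs.
  rewrite /Scone /= in Hs.
  move=> h; have : eps <= 0 by lra.
  by rewrite leNgt eps0.
move=> D [Dconv DS] CD.
apply/seteqP; split; last exact: CD.
move=> q Dq.
have [//|nCq] := pselect (@Clam R n m lam q).
exfalso.
set a := dotp lam (lsubmx q); set b := enorm (rsubmx q).
have hab : a < b by rewrite ltNge; apply/negP.
have b0 : 0 <= b by exact: enorm_ge0.
set c := row_mx (b *: lam - lsubmx q) (0 : 'rV[R]_m).
set p := 2^-1 *: (q + c).
have H2p : 2 *: p = q + c by rewrite /p scalerA mulfV // scale1r.
have cO : O c.
  rewrite /O /c /= row_mxKl row_mxKr enorm0 dotpD dotpN dotpZ ll mulr1 -/a.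
  by rewrite subr_gt0.
have pS : Scone p.
  rewrite /Scone /p /= !linearZ /= !linearD /= /c row_mxKl row_mxKr -!scalerDr addr0.
  rewrite addrC subrK scalerA !enormZ hlam mulr1 -/b normrM (ger0_norm b0).
  by [].
have pD : interior D p.
  rewrite /interior /=.
  have := @open_strict R n m lam; rewrite openE => /(_ c cO).
  rewrite /interior /= => /(nbhs_ballP _ _) [e e0 He].
  apply/nbhs_ballP; exists (e / 2); first by rewrite /= divr_gt0.
  move=> r; rewrite -ball_normE /ball_ /= => Hr.
  set c' := 2 *: r - q.
  have Hc' : c - c' = 2 *: (p - r).
    by rewrite /c' scalerBr H2p opprB addrA [q + c]addrC.
  have Oc' : O c'.
    apply: He; rewrite -ball_normE /ball_ /= Hc' normrZ ger0_norm //.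
    by rewrite -ltr_pdivlMl // mulrC.
  have := Dconv q c' Dq (CD _ (OC _ Oc')) (2^-1).
  have -> : 2^-1 *: q + (1 - 2^-1) *: c' = r.
    apply/rowP => i; rewrite /c' !mxE; by field.
  apply; first by rewrite invr_ge0 ler0n.
  by rewrite invf_le1 ?ler1n.
have : (interior D `&` @Scone R n m) p by split.
by rewrite DS.
Qed.
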